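(* Let $\mathcal{X}$ be a finite-dimensional Hilbert space, $\Phi,\Psi$ quantum channels on $\mathcal{L}(\mathcal{X})$, and $\sigma=|\psi\rangle\langle\psi|$ a pure state. Then $G_{\mathrm{ch}}(\Phi,\Psi;\sigma)=G(\Phi(\sigma),\Psi(\sigma))$.
   Context: Superfidelity: $G(\rho_1,\rho_2)=\operatorname{Tr}(\rho_1\rho_2)+\sqrt{1-\operatorname{Tr}\rho_1^2}\sqrt{1-\operatorname{Tr}\rho_2^2}$. Channel superfidelity: $G_{\mathrm{ch}}(\Phi,\Psi;\sigma)=\inf G\big((\Phi\otimes\mathbb{1}_{\mathcal{L}(\mathcal{Z})})(\xi),(\Psi\otimes\mathbb{1}_{\mathcal{L}(\mathcal{Z})})(\xi)\big)$ over all finite-dimensional $\mathcal{Z}$ and all pure states $\xi=|\zeta\rangle\langle\zeta|$ on $\mathcal{X}\otimes\mathcal{Z}$ with $\operatorname{Tr}_{\mathcal{Z}}\xi=\sigma$. *)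

(* Defs.v *)
(* Finite-dimensional quantum information over an arbitrary
   numClosedFieldType C (the complex numbers being the intended instance). *)
From HB Require Import structures.
From mathcomp Require Import all_boot all_order all_algebra.
Set Implicit Arguments. Unset Strict Implicit. Unset Printing Implicit Defensive.
Import Order.TTheory GRing.Theory Num.Theory.
Local Open Scope ring_scope.

Section Quantum.
Variable C : numClosedFieldType.

Definition mxadj (p q : nat) (A : 'M[C]_(p, q)) : 'M[C]_(q, p) :=
  \matrix_(i, j) (A j i)^*.

Definition psd (k : nat) (A : 'M[C]_k) : Prop :=
  A = mxadj A /\ forall v : 'cV[C]_k, 0 <= (mxadj v *m A *m v) 0 0.

Definition density (k : nat) (A : 'M[C]_k) : Prop := psd A /\ \tr A = 1.

Definition unit_vec (k : nat) (v : 'cV[C]_k) : Prop := mxadj v *m v = 1.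

Definition pure_state (k : nat) (v : 'cV[C]_k) : 'M[C]_k := v *m mxadj v.

(* X (x) Z is identified with C^(n*m) through mxvec_index : 'I_n -> 'I_m -> 'I_(n*m)
   and its inverse unpair. *)
Definition unpair (n m : nat) (p : 'I_(n * m)) : 'I_n * 'I_m :=
  enum_val (cast_ord (esym (mxvec_cast n m)) p).

Definition blk (n m : nat) (xi : 'M[C]_(n * m)) (a b : 'I_m) : 'M[C]_n :=
  \matrix_(i, j) xi (mxvec_index i a) (mxvec_index j b).

(* (Phi (x) 1_{L(Z)}) xi *)
Definition ext_id (n m : nat) (Phi : 'M[C]_n -> 'M[C]_n) (xi : 'M[C]_(n * m))
  : 'M[C]_(n * m) :=
  \matrix_(p, q) Phi (blk xi (unpair p).2 (unpair q).2) (unpair p).1 (unpair q).1.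

Definition ptrace (n m : nat) (xi : 'M[C]_(n * m)) : 'M[C]_n :=
  \matrix_(i, j) \sum_(a < m) xi (mxvec_index i a) (mxvec_index j a).

Definition channel (n : nat) (Phi : 'M[C]_n -> 'M[C]_n) : Prop :=
  [/\ linear Phi,
      (forall A, \tr (Phi A) = \tr A) &
      (forall (m : nat) (xi : 'M[C]_(n * m)), psd xi -> psd (ext_id Phi xi))].

Definition superfid (k : nat) (r1 r2 : 'M[C]_k) : C :=
  \tr (r1 *m r2) + sqrtC (1 - \tr (r1 *m r1)) * sqrtC (1 - \tr (r2 *m r2)).

Definition Gch_set (n : nat) (Phi Psi : 'M[C]_n -> 'M[C]_n) (sigma : 'M[C]_n)
  (x : C) : Prop :=
  exists (m : nat) (zeta : 'cV[C]_(n * m)),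
    [/\ unit_vec zeta, ptrace (pure_state zeta) = sigma &
        x = superfid (ext_id Phi (pure_state zeta)) (ext_id Psi (pure_state zeta))].

Definition is_inf (S : C -> Prop) (v : C) : Prop :=
  (forall x, S x -> v <= x) /\ (forall w, (forall x, S x -> w <= x) -> w <= v).

End Quantum.

(* Main.v *)
Require Import Defs.
From HB Require Import structures.
From mathcomp Require Import all_boot all_order all_algebra.
From mathcomp Require Import ring.
Set Implicit Arguments. Unset Strict Implicit. Unset Printing Implicit Defensive.
Import Order.TTheory GRing.Theory Num.Theory.
Local Open Scope ring_scope.

Section H.
Variable C : numClosedFieldType.

Lemma unpairK (n m : nat) (i : 'I_n) (a : 'I_m) : unpair (mxvec_index i a) = (i, a).
Proof. by rewrite /unpair /mxvec_index cast_ordK enum_rankK. Qed.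

Lemma sum_pair (n m : nat) (F : 'I_(n * m) -> C) :
  \sum_(p < n * m) F p = \sum_(i < n) \sum_(a < m) F (mxvec_index i a).
Proof.
rewrite pair_big /= (reindex (uncurry (@mxvec_index n m))) /=.
  by apply: eq_bigr => -[i a].
by case: (curry_mxvec_bij n m) => g g1 g2; exists g => x _; [apply: g1|apply: g2].
Qed.

Lemma lin0 (n : nat) (Phi : 'M[C]_n -> 'M[C]_n) : linear Phi -> Phi 0 = 0.
Proof.
move=> L; have := L 1 0 0; rewrite scale1r addr0 /= scale1r.
by move/(congr1 (fun x => x - Phi 0)); rewrite addrK subrr => <-.
Qed.

Lemma linZ (n : nat) (Phi : 'M[C]_n -> 'M[C]_n) c A : linear Phi -> Phi (c *: A) = c *: Phi A.
Proof. by move=> L; have := L c A 0; rewrite addr0 /= (lin0 L) addr0. Qed.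

Lemma mxadjM p q r (A : 'M[C]_(p, q)) (B : 'M[C]_(q, r)) :
  mxadj (A *m B) = mxadj B *m mxadj A.
Proof.
apply/matrixP => i j; rewrite !mxE rmorph_sum; apply: eq_bigr => k _.
by rewrite !mxE rmorphM mulrC.
Qed.

Lemma mxadjB p q (A B : 'M[C]_(p, q)) : mxadj (A - B) = mxadj A - mxadj B.
Proof. by apply/matrixP => i j; rewrite !mxE rmorphB. Qed.

Lemma mxadjK p q (A : 'M[C]_(p, q)) : mxadj (mxadj A) = A.
Proof. by apply/matrixP => i j; rewrite !mxE conjCK. Qed.

Lemma sum4 (n m : nat) (F : 'I_n -> 'I_n -> C) (g : 'I_m -> C) :
  \sum_(i < n) \sum_(a < m) \sum_(j < n) \sum_(b < m) (g a * (g b * F i j)) =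
  (\sum_a g a) ^+ 2 * \sum_i \sum_j F i j.
Proof.
rewrite mulr_sumr; apply: eq_bigr => i _.
transitivity (\sum_a g a * ((\sum_b g b) * \sum_j F i j)).
  apply: eq_bigr => a _; rewrite !mulr_sumr; apply: eq_bigr => j _.
  by rewrite mulr_suml mulr_sumr; apply: eq_bigr => b _; rewrite mulrA.
by rewrite -mulr_suml expr2 mulrA.
Qed.


Lemma decomp (n m : nat) (psi : 'cV[C]_n) (zeta : 'cV[C]_(n * m)) :
  unit_vec psi -> ptrace (pure_state zeta) = pure_state psi ->
  exists w : 'I_m -> C, forall i a, zeta (mxvec_index i a) 0 = psi i 0 * w a.
Proof.
move=> hpsi hpt.
pose M : 'M[C]_(n, m) := \matrix_(i, a) zeta (mxvec_index i a) 0.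
have hMM : M *m mxadj M = psi *m mxadj psi.
  apply/matrixP => i j; have := congr1 (fun X : 'M[C]_n => X i j) hpt.
  rewrite /pure_state !mxE => <-; apply: eq_bigr => a _.
  by rewrite !mxE big_ord1 !mxE.
pose P : 'M[C]_n := 1%:M - psi *m mxadj psi.
have hP : P *m psi = 0.
  by rewrite /P mulmxBl mul1mx -mulmxA hpsi mulmx1 subrr.
pose N := P *m M.
have hN : N *m mxadj N = 0.
  by rewrite /N mxadjM mulmxA -(mulmxA P) hMM mulmxA hP !mul0mx.
exists (fun a => (mxadj psi *m M) 0 a) => i a.
have H : \sum_b N i b * (N i b)^* = 0.
  transitivity ((N *m mxadj N) i i).
    by rewrite [RHS]mxE; apply: eq_bigr => b _; rewrite [mxadj N b i]mxE.
  by rewrite hN mxE.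
have h0 : N i a = 0.
  apply/eqP; rewrite -mul_conjC_eq0; apply/eqP.
  move/psumr_eq0P: H => H; apply: H => // b _; exact: mul_conjC_ge0.
move: h0; rewrite /N /P mulmxBl mul1mx -mulmxA !mxE => /eqP; rewrite addr_eq0 opprK => /eqP ->.
by rewrite big_ord1 mxE.
Qed.


Section Prod.
Variables (n m : nat) (psi : 'cV[C]_n) (w : 'I_m -> C) (zeta : 'cV[C]_(n * m)).
Hypothesis Hz : forall i a, zeta (mxvec_index i a) 0 = psi i 0 * w a.

Lemma blk_prod a b : blk (pure_state zeta) a b = (w a * (w b)^*) *: pure_state psi.
Proof.
apply/matrixP => i j; rewrite !mxE !big_ord1 !mxE !Hz rmorphM; ring.
Qed.

Lemma ext_prod (Phi : 'M[C]_n -> 'M[C]_n) : linear Phi -> forall i a j b,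
  ext_id Phi (pure_state zeta) (mxvec_index i a) (mxvec_index j b) =
  w a * (w b)^* * Phi (pure_state psi) i j.
Proof.
move=> L i a j b; rewrite mxE !unpairK /= blk_prod (linZ _ _ L) mxE //.
Qed.

Lemma tr_prod (X Y : 'M[C]_(n * m)) (A B : 'M[C]_n) :
  (forall i a j b, X (mxvec_index i a) (mxvec_index j b) = w a * (w b)^* * A i j) ->
  (forall i a j b, Y (mxvec_index i a) (mxvec_index j b) = w a * (w b)^* * B i j) ->
  \tr (X *m Y) = (\sum_a w a * (w a)^*) ^+ 2 * \tr (A *m B).
Proof.
move=> HX HY; rewrite /mxtrace sum_pair.
transitivity (\sum_(i < n) \sum_(a < m) \sum_(j < n) \sum_(b < m)
   (w a * (w a)^* * (w b * (w b)^* * (A i j * B j i)))).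
  apply: eq_bigr => i _; apply: eq_bigr => a _; rewrite mxE sum_pair.
  apply: eq_bigr => j _; apply: eq_bigr => b _; rewrite HX HY; ring.
rewrite sum4; congr (_ * _); apply: eq_bigr => i _; rewrite mxE //.
Qed.

Lemma unit_prod : unit_vec psi -> unit_vec zeta -> \sum_a w a * (w a)^* = 1.
Proof.
move=> hp hz.
have e1 : \sum_i (psi i 0)^* * psi i 0 = 1.
  have := congr1 (fun X : 'M[C]_1 => X 0 0) hp; rewrite !mxE eqxx mulr1n => <-.
  by apply: eq_bigr => i _; rewrite mxE.
have := congr1 (fun X : 'M[C]_1 => X 0 0) hz; rewrite [X in X = _ -> _]mxE sum_pair.
rewrite mxE eqxx mulr1n => <-.
transitivity (\sum_i (psi i 0)^* * psi i 0 * \sum_a w a * (w a)^*).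
  by rewrite -mulr_suml e1 mul1r.
apply: eq_bigr => i _; rewrite mulr_sumr; apply: eq_bigr => a _.
rewrite mxE Hz rmorphM; ring.
Qed.

End Prod.

End H.

Theorem corollary3 (C : numClosedFieldType) (n : nat)
  (Phi Psi : 'M[C]_n -> 'M[C]_n) (psi : 'cV[C]_n) :
  channel Phi -> channel Psi -> unit_vec psi ->
  is_inf (Gch_set Phi Psi (pure_state psi))
    (superfid (Phi (pure_state psi)) (Psi (pure_state psi))).
Proof.
move=> [LPhi _ _] [LPsi _ _] hpsi.
have key : forall x, Gch_set Phi Psi (pure_state psi) x ->
    x = superfid (Phi (pure_state psi)) (Psi (pure_state psi)).
  move=> x [m [zeta [hz hpt ->]]].
  have [w Hw] := decomp hpsi hpt.
  have s1 := unit_prod Hw hpsi hz.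
  have EPhi := ext_prod Hw LPhi; have EPsi := ext_prod Hw LPsi.
  by rewrite /superfid (tr_prod EPhi EPsi) (tr_prod EPhi EPhi)
    (tr_prod EPsi EPsi) s1 expr1n !mul1r.
split.
  by move=> x /key ->.
move=> v Hv.
pose z : 'cV[C]_(n * 1) := \col_p psi (unpair p).1 0.
have Hs : Gch_set Phi Psi (pure_state psi)
    (superfid (ext_id Phi (pure_state z)) (ext_id Psi (pure_state z))).
  exists 1%N, z; split => //.
  - apply/matrixP => i j; rewrite !ord1 !mxE sum_pair.
    have := congr1 (fun X : 'M[C]_1 => X 0 0) hpsi; rewrite !mxE => <-.
    by apply: eq_bigr => k _; rewrite big_ord1 !mxE !unpairK.
  - by apply/matrixP => i j; rewrite !mxE big_ord1 !mxE !big_ord1 !mxE !unpairK.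
by rewrite -(key _ Hs); apply: Hv.
Qed.
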